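(* Let $G$ be a finite directed multigraph with at least one cycle, and let $H$ be its largest full subgraph (the subgraph with vertex set $V(G)$ whose edges are exactly the edges of $G$ that belong to some cycle of $G$). Then $$\dim P(G) = |E(H)| - |V(G)| + c(H) - 1,$$ where $c(H)$ is the number of connected components of $H$ (counting isolated vertices as components).
   Context: For a directed multigraph $G$: a walk is a sequence of edges $(e_1,\dots,e_k)$ with $\mathrm{ar}(e_i)=\mathrm{st}(e_{i+1})$; a cycle is a walk with $\mathrm{st}(e_1)=\mathrm{ar}(e_k)$; a path is a walk with distinct edges and distinct vertices except possibly $\mathrm{st}(e_1)=\mathrm{ar}(e_k)$; a simple cycle is a non-empty cycle that is a path. For a non-empty cycle $\mathcal{C}$, $(\vec{e}_{\mathcal{C}})_e=n_e(\mathcal{C})/|\mathcal{C}|$ for $e\in E(G)$ ($n_e$ = number of traversals of $e$, $|\mathcal{C}|$ = number of edges). $P(G)=\mathrm{conv}\{\vec{e}_{\mathcal{C}}\mid\mathcal{C}\text{ simple cycle of }G\}\subset\mathbb{R}^{E(G)}$. A subgraph $H=(V(G),E')$, $E'\subseteq E(G)$, is full if every edge of $E'$ lies on a cycle of $H$. The dimension of a polytope is that of its affine span. *)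

(* Defs.v *)
From HB Require Import structures.
From mathcomp Require Import all_boot all_order all_algebra.
Set Implicit Arguments. Unset Strict Implicit. Unset Printing Implicit Defensive.
Import Order.TTheory GRing.Theory Num.Theory.
Local Open Scope ring_scope.

(* A finite directed multigraph: vertex type V, edge type E (both finite),
   st e = start vertex, ar e = arrival vertex.  Loops and parallel edges allowed.
   Walks are sequences of edges. *)

Section Graph.
Variables (V E : finType) (st ar : E -> V).

Definition is_walk (s : seq E) : bool :=
  sorted (fun e f => ar e == st f) s.

(* a cycle: a walk with st e_1 = ar e_k (vacuous for the empty walk) *)
Definition is_cycle (s : seq E) : bool :=
  is_walk s && (if s is e :: _ then st e == ar (last e s) else true).

Definition walk_verts (s : seq E) : seq V :=
  if s is e :: _ then st e :: map ar s else [::].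

(* a path: a walk with distinct edges and distinct vertices, except possibly
   v_0 = v_k: all pairs (i,j), i<j, (i,j) <> (0,k) have v_i <> v_j *)
Definition is_gpath (s : seq E) : bool :=
  let vs := in_tuple (walk_verts s) in
  [&& is_walk s, uniq s &
    [forall i : 'I_(size (walk_verts s)), forall j : 'I_(size (walk_verts s)),
       ((i < j)%N && ~~ ((i == 0%N :> nat) && (j == size s :> nat))) ==>
       (tnth vs i != tnth vs j)]].

Definition is_simple_cycle (s : seq E) : bool :=
  [&& s != [::], is_cycle s & is_gpath s].

Definition cycle_vec (R : realFieldType) (s : seq E) : E -> R :=
  fun e => (count_mem e s)%:R / (size s)%:R.

Definition cycle_polytope (R : realFieldType) (x : E -> R) : Prop :=
  exists (cs : seq (seq E)) (lam : seq R),
    [/\ size lam = size cs,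
        all is_simple_cycle cs,
        all (fun l => 0 <= l) lam,
        \sum_(i < size cs) lam`_i = 1 &
        forall e, x e = \sum_(i < size cs) lam`_i * cycle_vec R (nth [::] cs i) e].

(* H: edges of G lying on some cycle of G; c(H): number of connected
   components of H (undirected connectivity; isolated vertices count) *)
Definition on_cycle (e : E) : Prop := exists s, is_cycle s /\ e \in s.

Definition sub_adj (EH : {set E}) : rel V :=
  fun x y => [exists e in EH, ((st e == x) && (ar e == y)) || ((st e == y) && (ar e == x))].

Definition n_components (EH : {set E}) : nat :=
  n_comp (sub_adj EH) (@predT V).
End Graph.

(* Affine dimension of a set S of R^E: S contains points p0, p_1..p_k with
   p_i - p0 linearly independent (k+1 affinely independent points). *)
Definition aff_indep_ge (R : realFieldType) (E : finType) (S : (E -> R) -> Prop) (k : nat) : Prop :=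
  exists (p0 : E -> R) (ps : 'I_k -> (E -> R)),
    [/\ S p0, (forall i, S (ps i)) &
        forall c : 'I_k -> R,
          (forall e, \sum_(i < k) c i * (ps i e - p0 e) = 0) -> forall i, c i = 0].

Definition affine_dim (R : realFieldType) (E : finType) (S : (E -> R) -> Prop) (d : nat) : Prop :=
  aff_indep_ge S d /\ forall k, aff_indep_ge S k -> (k <= d)%N.

(* Main.v *)
Require Import Defs.
From HB Require Import structures.
From mathcomp Require Import all_boot all_order all_algebra.
From mathcomp Require Import ring lra zify.
Import Order.TTheory GRing.Theory Num.Theory.
Local Open Scope ring_scope.
Set Implicit Arguments. Unset Strict Implicit. Unset Printing Implicit Defensive.

Section Comb.
Variables (R : realFieldType) (V E : finType) (st ar : E -> V).
Definition rr := (fun e f : E => ar e == st f).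

Lemma is_cycleE s : is_cycle st ar s = cycle rr s.
Proof.
case: s => [|e p] //=; rewrite /is_cycle /is_walk /= rcons_path /rr eq_sym.
by [].
Qed.

Lemma path_map_st x q : path rr x q -> map st q = map ar (belast x q).
Proof.
elim: q x => [|y q IH] x //= /andP[/eqP -> /IH ->] //.
Qed.

Lemma cycle_perm s : cycle rr s -> perm_eq (map st s) (map ar s).
Proof.
case: s => // x p /= /path_map_st; rewrite belast_rcons => Hm.
have -> : ar x :: [seq ar i | i <- p] = map ar (x :: p) by [].
by rewrite -Hm map_rcons perm_sym perm_rcons.
Qed.

Lemma sum_count (s : seq E) (F : E -> R) :
  \sum_e (count_mem e s)%:R * F e = \sum_(a <- s) F a.
Proof.
elim: s => [|a s IH]; first by rewrite big_nil big1 // => e _; rewrite mul0r.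
rewrite big_cons -IH /=.
under eq_bigr do rewrite natrD mulrDl.
rewrite big_split /=; congr (_ + _).
rewrite (bigD1 a) //= eqxx mul1r big1 ?addr0 // => e /negbTE.
by rewrite eq_sym => ->; rewrite mul0r.
Qed.

Lemma simple_of s : s != [::] -> cycle rr s -> uniq (map ar s) ->
  is_simple_cycle st ar s.
Proof.
case: s => [|e p] // _ cyc U.
have cyc' := cyc; rewrite -is_cycleE in cyc'.
rewrite /is_simple_cycle /= cyc' /is_gpath.
move: cyc'; rewrite /is_cycle => /andP[-> /eqP Hst] /=.
have Us : uniq (e :: p) := map_uniq U.
apply/andP; split; first exact: Us.
apply/forallP => i; apply/forallP => j; apply/implyP => /andP[lij Hn].
rewrite !(tnth_nth (st e)) /=.
have hi := ltn_ord i; have hj := ltn_ord j.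
move: lij Hn hi hj; case: i => [[|i]] /= _; case: j => [[|j]] //= _.
- move=> _ Hj _ Hj'.
  have L : st e = nth (st e) (map ar (e :: p)) (size p).
    have := nth_last (st e) (ar e :: map ar p).
    by rewrite /= size_map => ->; rewrite Hst /= last_map.
  rewrite [X in X != _]L -[nth _ (ar e :: _) j]/(nth (st e) (map ar (e :: p)) j).
  by rewrite (nth_uniq (st e) _ _ U) //= ?size_map // eq_sym.
- move=> lij _ hi hj.
  rewrite -[nth _ (ar e :: _) i]/(nth (st e) (map ar (e :: p)) i).
  rewrite -[nth _ (ar e :: _) j]/(nth (st e) (map ar (e :: p)) j).
  by rewrite (nth_uniq (st e) _ _ U) //= ?size_map // ltn_eqF.
Qed.

Definition cnt (s : seq E) : E -> R := fun e => (count_mem e s)%:R.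
Definition conserv (x : E -> R) := forall v,
  \sum_e x e * (ar e == v)%:R = \sum_e x e * (st e == v)%:R.
Definition rv (x : E -> R) : 'rV[R]_#|E| := \row_j x (enum_val j).
Definition Mc (cs : seq (seq E)) : 'M[R]_(size cs, #|E|) :=
  \matrix_(i, j) cycle_vec R (nth [::] cs i) (enum_val j).
Definition Sp (x : E -> R) := exists cs,
  all (is_simple_cycle st ar) cs /\ (rv x <= Mc cs)%MS.

Lemma cnt_conserv s : cycle rr s -> conserv (cnt s).
Proof.
move=> cs v; rewrite /cnt !sum_count.
rewrite -(big_map ar predT (fun b => (b == v)%:R)).
rewrite -(big_map st predT (fun b => (b == v)%:R)).
by apply: perm_big; rewrite perm_sym cycle_perm.
Qed.

Lemma conserv_comb x y a : conserv x -> conserv y ->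
  conserv (fun e => x e + a * y e).
Proof.
move=> cx cy v.
under eq_bigr do rewrite mulrDl -mulrA.
under [in RHS]eq_bigr do rewrite mulrDl -mulrA.
by rewrite !big_split /= -!mulr_sumr cx cy.
Qed.

Lemma Sp_ext x y : (forall e, x e = y e) -> Sp x -> Sp y.
Proof.
move=> exy [cs [h1 h2]]; exists cs; split => //.
suff -> : rv y = rv x by [].
by apply/rowP => j; rewrite !mxE exy.
Qed.

Lemma Sp0 : Sp (fun _ => 0).
Proof.
exists [::]; split => //.
suff -> : rv (fun _ => 0) = 0 by apply: sub0mx.
by apply/rowP => j; rewrite !mxE.
Qed.

Lemma Mc_catl cs1 cs2 : (Mc cs1 <= Mc (cs1 ++ cs2))%MS.
Proof.
apply/row_subP => i.
have hi : (i < size (cs1 ++ cs2))%N by rewrite size_cat ltn_addr.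
apply: (eq_row_sub (Ordinal hi)); apply/rowP => j.
by rewrite !mxE /= nth_cat ltn_ord.
Qed.

Lemma Mc_catr cs1 cs2 : (Mc cs2 <= Mc (cs1 ++ cs2))%MS.
Proof.
apply/row_subP => i.
have hi : (size cs1 + i < size (cs1 ++ cs2))%N by rewrite size_cat ltn_add2l.
apply: (eq_row_sub (Ordinal hi)); apply/rowP => j.
by rewrite !mxE /= nth_cat ltnNge leq_addr /= addKn.
Qed.

Lemma SpD x y : Sp x -> Sp y -> Sp (fun e => x e + y e).
Proof.
move=> [c1 [a1 s1]] [c2 [a2 s2]]; exists (c1 ++ c2); split.
  by rewrite all_cat a1 a2.
have -> : rv (fun e => x e + y e) = rv x + rv y by apply/rowP => j; rewrite !mxE.
apply: addmx_sub.
  exact: submx_trans s1 (Mc_catl _ _).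
exact: submx_trans s2 (Mc_catr _ _).
Qed.

Lemma SpZ a x : Sp x -> Sp (fun e => a * x e).
Proof.
move=> [c1 [a1 s1]]; exists c1; split => //.
have -> : rv (fun e => a * x e) = a *: rv x by apply/rowP => j; rewrite !mxE.
exact: scalemx_sub.
Qed.

Lemma Sp_cyc c : is_simple_cycle st ar c -> Sp (cycle_vec R c).
Proof.
move=> sc; exists [:: c]; split; first by rewrite /= sc.
apply: (eq_row_sub (ord0 : 'I_1)); apply/rowP => j; by rewrite !mxE.
Qed.

Lemma seq_min (T : eqType) (F : T -> R) (s : seq T) a : a \in s ->
  exists2 m, m \in s & forall z, z \in s -> F m <= F z.
Proof.
elim: s a => [|b s IH] a //; rewrite inE => _.
case: s IH => [|c s] IH.
  by exists b; rewrite ?inE ?eqxx // => z; rewrite inE => /eqP ->.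
have [m ms Hm] := IH c (mem_head _ _).
case: (leP (F b) (F m)) => h.
- exists b; first exact: mem_head.
  move=> z; rewrite in_cons => /orP[/eqP -> //|/Hm]; exact: le_trans.
- exists m; first by rewrite in_cons ms orbT.
  move=> z; rewrite in_cons => /orP[/eqP -> |/Hm //]; exact: ltW.
Qed.

Lemma map_traject (T : Type) (f : T -> T) x n :
  map f (traject f x n) = traject f (f x) n.
Proof. by elim: n x => //= n IH x; rewrite IH. Qed.

Definition supp (x : E -> R) := [pred e | x e != 0].

Lemma nonneg_circ x : (forall e, 0 <= x e) -> conserv x -> Sp x.
Proof.
move=> pos cons.
move: {2}#|supp x| (leqnn #|supp x|) => k.
elim: k x pos cons => [|k IH] x pos cons Hsz.
  apply: (Sp_ext _ Sp0) => e; apply/esym/eqP; apply: contraT => h.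
  suff : (0 < #|supp x|)%N by rewrite leqn0 in Hsz; rewrite (eqP Hsz).
  by apply/card_gt0P; exists e.
case: (pickP (fun e => x e != 0)) => [e0 He0|Hnone]; last first.
  apply: (Sp_ext _ Sp0) => e; apply/esym/eqP.
  by have := Hnone e; rewrite /= => /negbFE.
have pe0 : 0 < x e0 by rewrite lt_def He0 pos.
pose g v := if [pick f | (0 < x f) && (st f == v)] is Some f then f else e0.
pose nx e := g (ar e).
have Hnext : forall e, 0 < x e -> 0 < x (nx e) /\ st (nx e) = ar e.
  move=> e pe; rewrite /nx /g; case: pickP => [f /andP[pf /eqP sf]|H0] //.
  exfalso.
  have h1 : \sum_f x f * (st f == ar e)%:R = 0.
    apply: big1 => f _; case: eqP => hf; last by rewrite mulr0.
    have := H0 f; rewrite /= hf eqxx andbT => /negbT; rewrite -leNgt => h.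
    by rewrite (@le_anti _ _ (x f) 0 (introT andP (conj h (pos f)))) mul0r.
  have h2 : x e <= \sum_f x f * (ar f == ar e)%:R.
    rewrite (bigD1 e) //= eqxx mulr1 lerDl; apply: sumr_ge0 => f _.
    by apply: mulr_ge0; rewrite ?ler0n.
  by move: h2; rewrite cons h1 leNgt pe.
have Hit : forall i, 0 < x (iter i nx e0).
  by elim => [|i IHi] //=; case: (Hnext _ IHi).
pose s := traject nx e0 #|E|.+1.
have nU : ~~ uniq s.
  apply/negP => /card_uniqP; rewrite size_traject => h.
  by have := max_card (mem s); rewrite h ltnn.
have [i [j [lij ljs]]] := uniqPn e0 nU.
rewrite size_traject in ljs.
rewrite !nth_traject // ?(ltn_trans lij) // => eqij.
pose y := iter i nx e0.
have cyc : fcycle nx (orbit nx y).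
  apply/(orbitPcycle 3 0); exists (j - i).-1.
  rewrite prednK ?subn_gt0 // /y -iterD subnK ?(ltnW lij) //.
have Hpc : forall z, z \in orbit nx y -> 0 < x z.
  move=> z /trajectP [i' _ ->]; rewrite /y -iterD; exact: Hit.
set c := orbit nx y in cyc Hpc.
have Uc : uniq c by apply: orbit_uniq.
have cne : c != [::].
  by apply/eqP => h; have := in_orbit nx y; rewrite -/c h.
have crr : cycle rr c.
  apply: (sub_in_cycle (P := [pred z | 0 < x z])) cyc; last first.
    by apply/allP => z /Hpc.
  move=> a b pa _ /eqP <-; rewrite /rr; case: (Hnext a pa) => _ ->.
  by rewrite eqxx.
have Umap : uniq (map ar c).
  apply: (@map_uniq _ _ g); rewrite -map_comp.
  have -> : map (g \o ar) c = map nx c by [].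
  have ord := order_gt0 nx y.
  have itc : iter (order nx y) nx y = y by apply/(orbitPcycle 0 4).
  rewrite /c /orbit in Uc *.
  move: itc Uc; case: (order nx y) ord => [|k'] // _.
  move=> itc Uc; rewrite map_traject trajectSr -iterSr itc rcons_uniq.
  by move: Uc; rewrite trajectS /= => /andP[-> ->].
have sc : is_simple_cycle st ar c := simple_of cne crr Umap.
have [em emc Hmin] := seq_min x (in_orbit nx y).
set mv := x em.
have pm : 0 < mv := Hpc em emc.
pose x' := fun e => x e + (- mv) * cnt c e.
have cntE : forall e, cnt c e = (e \in c)%:R.
  by move=> e; rewrite /cnt count_uniq_mem.
have pos' : forall e, 0 <= x' e.
  move=> e; rewrite /x' cntE; case: (boolP (e \in c)) => ec.
    by rewrite mulr1 subr_ge0; exact: Hmin.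
  by rewrite mulr0 addr0; exact: pos.
have cons' : conserv x' := conserv_comb _ cons (cnt_conserv crr).
have Hsub : (#|supp x'| < #|supp x|)%N.
  apply: proper_card; apply/properP; split.
    apply/subsetP => e; rewrite !inE; apply: contraNN => /eqP xe0.
    have : e \notin c by apply/negP => /Hpc; rewrite xe0 ltxx.
    by move=> /negbTE ec; rewrite /x' cntE ec mulr0 addr0 xe0.
  exists em; rewrite !inE ?(gt_eqF pm) //.
  by rewrite /x' cntE emc mulr1 subrr eqxx.
have Sx' := IH x' pos' cons' (leq_trans Hsub Hsz).
apply: (Sp_ext _ (SpD Sx' (SpZ (mv * (size c)%:R) (Sp_cyc sc)))) => e.
have sz : (size c)%:R != 0 :> R by rewrite pnatr_eq0 size_eq0.
rewrite /x' /cnt /cycle_vec; field; exact: sz.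
Qed.

Lemma sumE (T : finType) (F : T -> R) :
  \sum_(i < #|T|) F (enum_val i) = \sum_x F x.
Proof. by rewrite -(big_enum_val F); apply: eq_bigl => x; rewrite inE. Qed.

Lemma sum_pick (T : finType) (a : T) (G : T -> R) :
  \sum_x (a == x)%:R * G x = G a.
Proof.
rewrite (bigD1 a) //= eqxx mul1r big1 ?addr0 // => x /negbTE.
by rewrite eq_sym => ->; rewrite mul0r.
Qed.

Lemma row_free_from m n (A : 'M[R]_(m, n)) :
  (forall u : 'rV_m, u *m A = 0 -> u = 0) -> row_free A.
Proof.
move=> H; rewrite -kermx_eq0; apply/eqP/row_matrixP => i; rewrite row0.
by apply: H; apply/sub_kermxP; exact: row_sub.
Qed.

Definition Inc : 'M[R]_(#|E|, #|V|) :=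
  \matrix_(i, j) ((ar (enum_val i) == enum_val j)%:R - (st (enum_val i) == enum_val j)%:R).

Lemma rvInc x : rv x *m Inc = 0 <-> conserv x.
Proof.
have key : forall v, \sum_(i < #|E|) x (enum_val i) *
    ((ar (enum_val i) == v)%:R - (st (enum_val i) == v)%:R) =
    \sum_e x e * (ar e == v)%:R - \sum_e x e * (st e == v)%:R.
  move=> v; rewrite (sumE (fun e => x e * ((ar e == v)%:R - (st e == v)%:R))).
  by rewrite -sumrB; apply: eq_bigr => e _; rewrite mulrBr.
split => [H v | H].
  move/rowP: H => /(_ (enum_rank v)); rewrite !mxE.
  under eq_bigr do rewrite !mxE enum_rankK.
  by rewrite key => /eqP; rewrite subr_eq0 => /eqP.
apply/rowP => j; rewrite !mxE.
under eq_bigr do rewrite !mxE.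
by rewrite key H subrr.
Qed.

Variable EH : {set E}.
Hypothesis hEH : forall e, e \in EH <-> on_cycle st ar e.

Definition Dp : 'M[R]_(#|EH|, #|E|) := \matrix_(k, j) (enum_val k == enum_val j)%:R.
Definition Zm := (Dp :&: kermx Inc)%MS.

Lemma inDp x : (rv x <= Dp)%MS <-> (forall e, e \notin EH -> x e = 0).
Proof.
split.
  move=> /submxP [u hu] e he; move/rowP: hu => /(_ (enum_rank e)).
  rewrite !mxE enum_rankK => ->; rewrite big1 // => k _; rewrite !mxE enum_rankK.
  case: eqP => [hk|]; last by rewrite mulr0.
  by move: (enum_valP k); rewrite hk (negbTE he).
move=> H; apply/submxP; exists (\row_k x (enum_val k)); apply/rowP => j.
rewrite !mxE; under eq_bigr do rewrite !mxE.
rewrite -(big_enum_val (fun e => x e * (e == enum_val j)%:R)).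
case: (boolP (enum_val j \in EH)) => hj.
  rewrite (bigD1 (enum_val j)) //= eqxx mulr1 big1 ?addr0 // => e /andP[_ /negbTE ->].
  by rewrite mulr0.
rewrite H // big1 // => e he; case: eqP => [h|]; last by rewrite mulr0.
by move: he hj; rewrite h => ->.
Qed.

Lemma inZ x : (rv x <= Zm)%MS <-> (forall e, e \notin EH -> x e = 0) /\ conserv x.
Proof.
rewrite /Zm sub_capmx; split.
  move=> /andP[h1 /sub_kermxP h2]; split; first exact/inDp.
  exact/rvInc.
move=> [h1 h2]; apply/andP; split; first exact/inDp.
exact/sub_kermxP/rvInc.
Qed.

Lemma rank_Dp : \rank Dp = #|EH|.
Proof.
apply/eqP; apply: row_free_from => u hu; apply/rowP => k; rewrite mxE.
move/rowP: hu => /(_ (enum_rank (enum_val k))); rewrite !mxE.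
under eq_bigr do rewrite !mxE enum_rankK.
rewrite (bigD1 k) //= eqxx mulr1 big1 ?addr0 // => k' hk'.
case: eqP => [/enum_val_inj h|]; last by rewrite mulr0.
by rewrite h eqxx in hk'.
Qed.

Definition adj := sub_adj st ar EH.

Lemma adj_sym : connect_sym adj.
Proof.
apply: sym_connect_sym => x y; rewrite /adj /sub_adj.
by apply/existsP/existsP => -[e /andP[he h]]; exists e; rewrite he orbC.
Qed.

Lemma const_connect (psi : V -> R) :
  (forall e, e \in EH -> psi (ar e) = psi (st e)) ->
  forall x y, connect adj x y -> psi x = psi y.
Proof.
move=> H x y /connectP [p pp ->]; elim: p x pp => //= z p IH x /andP[hxz hp].
rewrite -(IH z hp); move: hxz => /existsP [e /andP[he /orP[]]] /andP[/eqP hs /eqP ha].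
  by rewrite -hs -ha H.
by rewrite -hs -ha H.
Qed.

Lemma sum_row_pick (w : 'rV[R]_#|V|) a b :
  \sum_j w 0 j * ((a == enum_val j)%:R - (b == enum_val j)%:R) =
  w 0 (enum_rank a) - w 0 (enum_rank b).
Proof.
transitivity (\sum_(j < #|V|) (fun v => w 0 (enum_rank v) * ((a == v)%:R - (b == v)%:R)) (enum_val j)).
  by apply: eq_bigr => j _; rewrite enum_valK.
rewrite (sumE (fun v => w 0 (enum_rank v) * ((a == v)%:R - (b == v)%:R))).
under eq_bigr do rewrite mulrBr.
rewrite sumrB; under eq_bigr do rewrite mulrC.
by under [X in _ - X]eq_bigr do rewrite mulrC; rewrite !sum_pick.
Qed.

Definition IHm := Dp *m Inc.

Lemma IHmE k j : IHm k j =
  (ar (enum_val k) == enum_val j)%:R - (st (enum_val k) == enum_val j)%:R.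
Proof.
rewrite !mxE; under eq_bigr do rewrite !mxE.
by rewrite (sumE (fun e => (enum_val k == e)%:R *
   ((ar e == enum_val j)%:R - (st e == enum_val j)%:R))) sum_pick.
Qed.

Definition Lm := kermx IHm^T.

Lemma inL (w : 'rV[R]_#|V|) : (w <= Lm)%MS <->
  forall e, e \in EH -> w 0 (enum_rank (ar e)) = w 0 (enum_rank (st e)).
Proof.
have key : forall k, (w *m IHm^T) 0 k =
    w 0 (enum_rank (ar (enum_val k))) - w 0 (enum_rank (st (enum_val k))).
  move=> k; rewrite [LHS]mxE -sum_row_pick; apply: eq_bigr => j _.
  by rewrite [IHm^T _ _]mxE IHmE.
split.
  move/sub_kermxP/rowP => H e he.
  have := H (enum_rank_in he e); rewrite key mxE enum_rankK_in //.
  by move/eqP; rewrite subr_eq0 => /eqP.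
move=> H; apply/sub_kermxP/rowP => k; rewrite key mxE H ?subrr //.
exact: enum_valP.
Qed.

Definition Ar := [pred x | roots adj x].

Lemma ncompE : n_components st ar EH = #|Ar|.
Proof. by apply: eq_card => x; rewrite !inE andbT. Qed.

Lemma rank_Lm : \rank Lm = #|Ar|.
Proof.
apply/eqP; rewrite eqn_leq; apply/andP; split.
  pose Rt : 'M[R]_(#|V|, #|Ar|) := \matrix_(j, r) (enum_val j == enum_val r)%:R.
  rewrite -(mxrank_mul_ker Lm Rt).
  have -> : \rank (Lm :&: kermx Rt)%MS = 0%N.
    apply/eqP; rewrite mxrank_eq0; apply/eqP/row_matrixP => i; rewrite row0.
    set w := row i _.
    have hw : (w <= Lm :&: kermx Rt)%MS by apply: row_sub.
    rewrite sub_capmx in hw; case/andP: hw => /inL hL /sub_kermxP /rowP hR.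
    pose psi v := w 0 (enum_rank v).
    have cst := const_connect (psi := psi) hL.
    apply/rowP => j; rewrite [RHS]mxE.
    have -> : w 0 j = psi (enum_val j) by rewrite /psi enum_valK.
    set v := enum_val j.
    rewrite (cst v (fingraph.root adj v) (connect_root _ _)).
    have rr0 : fingraph.root adj v \in Ar by rewrite inE; exact: roots_root adj_sym _.
    set r := enum_rank_in rr0 (fingraph.root adj v).
    have H1 : (w *m Rt) 0 r = psi (enum_val r).
      rewrite mxE (eq_bigr (fun j0 => (fun u => psi u * (u == enum_val r)%:R) (enum_val j0))).
        apply: (etrans (sumE (fun u => psi u * (u == enum_val r)%:R))).
        under eq_bigr do rewrite mulrC eq_sym.
        by rewrite sum_pick.
      move=> j0 _; rewrite /psi enum_valK; congr (_ * _); by rewrite /Rt mxE.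
    have E1 : enum_val r = fingraph.root adj v := enum_rankK_in rr0 rr0.
    by rewrite -E1 -H1 hR mxE.
  by rewrite addn0 rank_leq_col.
pose Ch : 'M[R]_(#|Ar|, #|V|) := \matrix_(r, j) (fingraph.root adj (enum_val j) == enum_val r)%:R.
have rootE : forall r : 'I_#|Ar|, fingraph.root adj (enum_val r) = enum_val r.
  by move=> r; have := enum_valP r; rewrite inE => /eqP.
have fr : row_free Ch.
  apply: row_free_from => u hu; apply/rowP => r; rewrite mxE.
  move/rowP: hu => /(_ (enum_rank (enum_val r))); rewrite !mxE.
  under eq_bigr do rewrite !mxE enum_rankK rootE.
  rewrite (bigD1 r) //= eqxx mulr1 big1 ?addr0 // => r' hr'.
  case: eqP => [/enum_val_inj h|]; last by rewrite mulr0.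
  by rewrite h eqxx in hr'.
rewrite -(eqP fr); apply: mxrankS; apply/row_subP => r; apply/inL => e he.
rewrite !mxE !enum_rankK; congr ((_ == _)%:R).
apply/esym/(fingraph.rootP adj_sym); apply: connect1.
by apply/existsP; exists e; rewrite he !eqxx.
Qed.

Lemma rank_Z : (\rank Zm + (#|V| - #|Ar|) = #|EH|)%N /\ (#|Ar| <= #|V|)%N.
Proof.
have h1 := mxrank_mul_ker Dp Inc; rewrite rank_Dp in h1.
have h2 := mxrank_ker IHm^T; rewrite -/Lm rank_Lm mxrank_tr in h2.
have h3 := rank_leq_col IHm.
have h4 : (#|Ar| <= #|V|)%N by rewrite h2 leq_subr.
split => //.
have -> : (#|V| - #|Ar| = \rank IHm)%N by rewrite h2 subKn.
by rewrite addnC.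
Qed.

Lemma conserv0 : conserv (fun _ => 0).
Proof. by move=> v; rewrite !big1 // => e _; rewrite mul0r. Qed.

Lemma conserv_ext x y : (forall e, x e = y e) -> conserv x -> conserv y.
Proof.
move=> h cx v; under eq_bigr => e _ do rewrite -h.
by under [RHS]eq_bigr => e _ do rewrite -h.
Qed.

Lemma exists_y : exists y : E -> R, [/\ (forall e, 0 <= y e), conserv y &
  (forall e, e \in EH -> 1 <= y e)].
Proof.
suff: forall l : seq E, exists y : E -> R, [/\ (forall e, 0 <= y e), conserv y &
    (forall e, e \in l -> e \in EH -> 1 <= y e)].
  move=> /(_ (enum E)) [y [h1 h2 h3]]; exists y; split => // e; apply: h3.
  by rewrite mem_enum.
elim => [|a l [y [h1 h2 h3]]].
  by exists (fun _ => 0); split => //; exact: conserv0.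
case: (boolP (a \in EH)) => ha; last first.
  exists y; split => // e; rewrite inE => /orP[/eqP -> he|]; last exact: h3.
  by rewrite he in ha.
have [s [cs as_]] := (hEH a).1 ha.
have cpos : forall e, 0 <= cnt s e by move=> e; rewrite /cnt ler0n.
exists (fun e => y e + 1 * cnt s e); split.
- by move=> e; rewrite mul1r addr_ge0.
- by apply: conserv_comb h2 (cnt_conserv _); rewrite -is_cycleE.
move=> e; rewrite inE => /orP[/eqP -> _|el he].
  have : 1 <= cnt s a by rewrite /cnt ler1n -has_count has_pred1.
  by move: (h1 a) => h h'; rewrite mul1r; lra.
by move: (h3 e el he) (cpos e) => h h'; rewrite mul1r; lra.
Qed.

Lemma Z_Sp x : (rv x <= Zm)%MS -> Sp x.
Proof.
move=> /inZ [h0 cx].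
have [y [yp cy y1]] := exists_y.
pose t := \sum_e `|x e|.
have tp : 0 <= t by apply: sumr_ge0.
have pos : forall e, 0 <= x e + t * y e.
  move=> e; have ht : `|x e| <= t.
    by rewrite /t (bigD1 e) //= lerDl sumr_ge0.
  have hn : - `|x e| <= x e by have := lexx `|x e|; rewrite ler_norml => /andP[].
  case: (boolP (e \in EH)) => he.
    have := ler_peMr tp (y1 e he) => h; lra.
  by rewrite h0 // add0r mulr_ge0.
have Sz := nonneg_circ pos (conserv_comb t cx cy).
have Sy := nonneg_circ yp cy.
by apply: (Sp_ext _ (SpD Sz (SpZ (- t) Sy))) => e; ring.
Qed.

Lemma exists_cs : exists cs, all (is_simple_cycle st ar) cs /\ (Zm <= Mc cs)%MS.
Proof.
suff: forall l : seq 'I_#|E|, exists cs, all (is_simple_cycle st ar) cs /\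
    forall i, i \in l -> (row i Zm <= Mc cs)%MS.
  move=> /(_ (enum 'I_#|E|)) [cs [h1 h2]]; exists cs; split => //.
  by apply/row_subP => i; apply: h2; rewrite mem_enum.
elim => [|a l [cs [h1 h2]]]; first by exists [::].
have : Sp (fun e => Zm a (enum_rank e)).
  apply: Z_Sp; have -> : rv (fun e => Zm a (enum_rank e)) = row a Zm.
    by apply/rowP => j; rewrite !mxE enum_valK.
  exact: row_sub.
move=> [cs' [h1' h2']]; exists (cs ++ cs'); split; first by rewrite all_cat h1 h1'.
move=> i; rewrite inE => /orP[/eqP ->|il].
  have -> : row a Zm = rv (fun e => Zm a (enum_rank e)).
    by apply/rowP => j; rewrite !mxE enum_valK.
  exact: submx_trans h2' (Mc_catr _ _).
exact: submx_trans (h2 i il) (Mc_catl _ _).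
Qed.

Lemma cyc_inZ c : is_simple_cycle st ar c -> (rv (cycle_vec R c) <= Zm)%MS.
Proof.
case/and3P => cne cc _; apply/inZ; split.
  move=> e he; rewrite /cycle_vec.
  have : e \notin c.
    apply/negP => ec; have : on_cycle st ar e by exists c.
    by move/hEH; rewrite (negbTE he).
  by move/count_memPn ->; rewrite mul0r.
have : conserv (fun e => 0 + (size c)%:R^-1 * cnt c e).
  by apply: conserv_comb conserv0 (cnt_conserv _); rewrite -is_cycleE.
by apply: conserv_ext => e; rewrite add0r /cnt /cycle_vec mulrC.
Qed.

Lemma Mc_inZ cs : all (is_simple_cycle st ar) cs -> (Mc cs <= Zm)%MS.
Proof.
move=> ha; apply/row_subP => i.
have -> : row i (Mc cs) = rv (cycle_vec R (nth [::] cs i)).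
  by apply/rowP => j; rewrite !mxE.
by apply: cyc_inZ; apply: (allP ha); apply: mem_nth.
Qed.

Lemma sum_cv (c : seq E) : c != [::] -> \sum_(e : E) cycle_vec R c e = 1.
Proof.
move=> cne; rewrite /cycle_vec -mulr_suml.
have -> : \sum_e (count_mem e c)%:R = (size c)%:R :> R.
  rewrite (eq_bigr (fun e => (count_mem e c)%:R * 1)); last by move=> e _; rewrite mulr1.
  rewrite sum_count.
  by elim: c {cne} => [|a c IH]; rewrite ?big_nil // big_cons IH -natr1 addrC.
by rewrite mulfV // pnatr_eq0 size_eq0.
Qed.

Lemma P_inZ x : cycle_polytope st ar x -> (rv x <= Zm)%MS /\ \sum_e x e = 1.
Proof.
move=> [cs [lam [hs ha hl h1 hx]]]; split.
  have -> : rv x = \sum_(i < size cs) lam`_i *: rv (cycle_vec R (nth [::] cs i)).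
    apply/rowP => j; rewrite mxE hx summxE; apply: eq_bigr => i _.
    by rewrite !mxE.
  apply: summx_sub => i _; apply: scalemx_sub; apply: cyc_inZ.
  by apply: (allP ha); apply: mem_nth.
under eq_bigr do rewrite hx.
rewrite exchange_big /= -h1; apply: eq_bigr => i _.
rewrite -mulr_sumr sum_cv ?mulr1 //.
by have := allP ha _ (mem_nth [::] (ltn_ord i)) => /and3P[].
Qed.

Lemma P_cyc c : is_simple_cycle st ar c -> cycle_polytope st ar (cycle_vec R c).
Proof.
move=> sc; exists [:: c], [:: 1]; split => //=; first by rewrite sc.
- by rewrite ler01.
- by rewrite big_ord1.
by move=> e; rewrite big_ord1 mul1r.
Qed.

Lemma main_sec : (exists s : seq E, s != [::] /\ is_cycle st ar s) ->
  exists d : nat,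
    affine_dim (cycle_polytope st ar (R:=R)) d /\
    (d%:Z = #|EH|%:Z - #|V|%:Z + (n_components st ar EH)%:Z - 1)%R.
Proof.
move=> [s0 [s0ne s0c]].
have [hrk har] := rank_Z.
have N1 : (0 < \rank Zm)%N.
  have hs : (rv (cnt s0) <= Zm)%MS.
    apply/inZ; split.
      move=> e he; apply/eqP; rewrite /cnt pnatr_eq0; apply/eqP/count_memPn.
      apply/negP => es; have : on_cycle st ar e by exists s0.
      by move/hEH; rewrite (negbTE he).
    by apply: cnt_conserv; rewrite -is_cycleE.
  have nz : rv (cnt s0) != 0.
    case: s0 s0ne {s0c hs} => [|e p] // _; apply/eqP => /rowP/(_ (enum_rank e)).
    by rewrite !mxE enum_rankK /cnt /= eqxx => /eqP; rewrite pnatr_eq0.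
  by have := mxrankS hs; rewrite rank_rV nz.
exists (\rank Zm).-1; split; last first.
  rewrite ncompE; move: hrk har N1; set N := \rank Zm; move=> hrk har N1.
  have -> : N.-1 = (N - 1)%N by rewrite subn1.
  lia.
split.
  have [cs [hcs hZ]] := exists_cs.
  have hM := Mc_inZ hcs.
  have rM : \rank (Mc cs) = (\rank Zm).-1.+1.
    by rewrite prednK //; apply/eqP; rewrite eqn_leq !mxrankS.
  have : exists f : 'I_(\rank (Mc cs)) -> 'I_(size cs), row_free (rowsub f (Mc cs)).
    by exists (fun i => maxrankfun (Mc cs) i); exact: maxrowsub_free.
  rewrite rM; set d := (\rank Zm).-1; case=> f hf.
  pose pts (j : 'I_d.+1) := cycle_vec R (nth [::] cs (f j)).
  have spts : forall j, is_simple_cycle st ar (nth [::] cs (f j)).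
    by move=> j; apply: (allP hcs); apply: mem_nth.
  exists (pts ord0), (fun i => pts (lift ord0 i)); split.
  - exact: P_cyc.
  - by move=> i; exact: P_cyc.
  move=> cc hcc.
  pose u := \row_(j < d.+1) (if unlift ord0 j is Some i then cc i else - \sum_i cc i).
  have : u *m rowsub f (Mc cs) = 0 *m rowsub f (Mc cs).
    rewrite mul0mx; apply/rowP => jj; rewrite !mxE big_ord_recl /= !mxE unlift_none.
    under eq_bigr do rewrite !mxE liftK.
    apply: etrans (hcc (enum_val jj)).
    rewrite mulNr mulr_suml -sumrN -big_split /=; apply: eq_bigr => i _.
    rewrite /pts; ring.
  move/(row_free_inj hf)/rowP => u0 i.
  by have := u0 (lift ord0 i); rewrite !mxE liftK.
move=> k [p0 [ps [hp0 hps hind]]].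
pose pt (j : 'I_k.+1) := if unlift ord0 j is Some i then ps i else p0.
have hp : forall j, cycle_polytope st ar (pt j).
  by move=> j; rewrite /pt; case: unlift.
pose Q : 'M[R]_(k.+1, #|E|) := \matrix_(j, jj) pt j (enum_val jj).
have QZ : (Q <= Zm)%MS.
  apply/row_subP => j; have -> : row j Q = rv (pt j) by apply/rowP => jj; rewrite !mxE.
  exact: (P_inZ (hp j)).1.
have fQ : row_free Q.
  apply: row_free_from => u hu.
  have Hc : forall e, \sum_j u 0 j * pt j e = 0.
    move=> e; move/rowP: hu => /(_ (enum_rank e)); rewrite [RHS]mxE => H.
    rewrite -[RHS]H mxE; apply: eq_bigr => j _; by rewrite /Q mxE enum_rankK.
  have Hs : \sum_j u 0 j = 0.
    have : \sum_e \sum_j u 0 j * pt j e = 0 by rewrite big1 // => x _; exact: Hc.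
    rewrite exchange_big /= => H; rewrite -[RHS]H; apply: eq_bigr => j _.
    by rewrite -mulr_sumr (P_inZ (hp j)).2 mulr1.
  rewrite big_ord_recl in Hs.
  have h0 : forall i, u 0 (lift ord0 i) = 0.
    apply: hind => e; rewrite -[RHS](Hc e) big_ord_recl /pt unlift_none.
    under [in RHS]eq_bigr do rewrite liftK.
    have -> : u 0 ord0 = - \sum_i u 0 (lift ord0 i).
      by apply/eqP; rewrite -subr_eq0 opprK Hs.
    rewrite mulNr mulr_suml -sumrN -big_split /=; apply: eq_bigr => i _; ring.
  apply/rowP => j; rewrite mxE; case: (unliftP ord0 j) => [i ->|->]; first exact: h0.
  have := Hs; under eq_bigr do rewrite h0.
  by rewrite big1 // addr0.
have := mxrankS QZ; rewrite (eqP fQ) => h.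
by rewrite -ltnS prednK.
Qed.
End Comb.

Theorem mainTheorem4 (R : realFieldType) (V E : finType) (st ar : E -> V)
    (EH : {set E}) :
  (exists s : seq E, s != [::] /\ is_cycle st ar s) ->
  (forall e, e \in EH <-> on_cycle st ar e) ->
  exists d : nat,
    affine_dim (cycle_polytope st ar (R:=R)) d /\
    (d%:Z = #|EH|%:Z - #|V|%:Z + (n_components st ar EH)%:Z - 1)%R.
Proof. by move=> h1 h2; exact: (@main_sec R V E st ar EH h2 h1). Qed.
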